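(* Let $G=(V,E)$ be a finite, undirected, unweighted, connected graph with $n=|V|$, and let $k$ be the length of a shortest walk in $G$ visiting every vertex at least once. The CNOT cost of the QFT circuit produced by the construction in the context is at most $3kn-2n$.
   Context: A walk is a sequence $(u_1,\dots,u_h)$ of vertices with consecutive entries adjacent (repetitions allowed), of length $h$. Each vertex carries one physical qubit; two-qubit gates only act on qubits at adjacent vertices. Gates: Hadamard $H$; controlled phase $CR_d=\mathrm{diag}(1,1,1,e^{i\pi/2^{d-1}})$; SWAP. Construction: let $P$ be a shortest walk in $G$ visiting all vertices. Place logical qubit $r$ ($1\le r\le n$) on the $r$-th distinct vertex of $P$ in order of first occurrence; whenever a SWAP is applied the logical qubits on its two vertices exchange places. Let $R=V$. For $r=1,\dots,n$: let $P'=(u_1,\dots,u_{k'})$ be $P$ if $r=1$, and otherwise a shortest walk in the induced subgraph $G[R]$ that starts at the vertex currently holding logical qubit $r$ and visits every vertex of $R$. Cascade $r$: apply $H$ to $u_1$; $j=1$, $U=\emptyset$; while $j\le k'-1$: (i) if $u_{j+1}\notin U$, apply $CR_d$ with control $u_{j+1}$, target $u_j$, where $d$ is (index of the logical qubit on $u_{j+1}$) $-\,r$, and add $u_{j+1}$ to $U$; (ii) if $j\le k'-2$ and $u_{j+2}=u_j$, set $j\leftarrow j+2$; otherwise, if $k'\ne 2$ apply SWAP to $u_j,u_{j+1}$, and set $j\leftarrow j+1$. After cascade $r$, remove from $R$ the vertex holding logical qubit $r$. CNOT cost: number of CNOTs after decomposition, counting $H$ as 0, each $CR_d$ as 2, each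 SWAP as 3, and a $CR_d$ immediately followed by a SWAP on the same two qubits as 3 in total. *)

(* Defs.v *)
From mathcomp Require Import all_boot all_algebra.

Set Implicit Arguments.
Unset Strict Implicit.
Unset Printing Implicit Defensive.

Section QFTDefs.
Variable T : finType.
Variable e : rel T.

(* A walk (u_1,...,u_h), h >= 1, consecutive entries adjacent; its length is h = size s. *)
Definition is_walk (s : seq T) : bool :=
  if s is x :: s' then path e x s' else false.

Definition walk_in (R : {set T}) (s : seq T) : bool :=
  is_walk s && all (fun x => x \in R) s.

Definition covers (R : {set T}) (s : seq T) : bool :=
  [forall x in R, x \in s].

Definition shortest_cover_walk (R : {set T}) (s : seq T) : Prop :=
  [/\ walk_in R s, covers R s &
      forall s', walk_in R s' -> covers R s' -> size s <= size s'].

Definition shortest_cover_walk_from (R : {set T}) (v : T) (s : seq T) : Prop :=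
  [/\ walk_in R s, covers R s, ohead s = Some v &
      forall s', walk_in R s' -> covers R s' -> ohead s' = Some v ->
                 size s <= size s'].

Definition min_cover_length (k : nat) : Prop :=
  (exists s, [/\ walk_in setT s, covers setT s & size s = k]) /\
  (forall s, walk_in setT s -> covers setT s -> k <= size s).

Inductive gate :=
| GH of T
| GCR of int & T & T     (* GCR d control target *)
| GSWAP of T & T.

(* placement: vertex |-> index of the logical qubit it holds *)
Definition swap_pl (pl : T -> nat) (a b : T) : T -> nat :=
  fun x => if x == a then pl b else if x == b then pl a else pl x.

(* The while-loop of cascade r, run on the suffix l = (u_j, ..., u_k') of P';
   sw = (k' != 2); U the set of already used controls. *)
Fixpoint casc_loop (r : nat) (sw : bool) (U : {set T}) (pl : T -> nat)
    (l : seq T) : seq gate * (T -> nat) :=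
  match l with
  | uj :: tl =>
    match tl with
    | uj1 :: rest =>
      let g1 := if uj1 \in U then [::]
                else [:: GCR ((pl uj1)%:Z - r%:Z) uj1 uj] in
      let U' := uj1 |: U in
      if (if rest is uj2 :: _ then uj2 == uj else false)
      then let res := casc_loop r sw U' pl rest in (g1 ++ res.1, res.2)
      else let g2 := if sw then [:: GSWAP uj uj1] else [::] in
           let pl1 := if sw then swap_pl pl uj uj1 else pl in
           let res := casc_loop r sw U' pl1 tl in (g1 ++ g2 ++ res.1, res.2)
    | [::] => ([::], pl)
    end
  | [::] => ([::], pl)
  end.

Definition cascade (r : nat) (w : seq T) (pl : T -> nat) : seq gate * (T -> nat) :=
  let res := casc_loop r (size w != 2) set0 pl w in
  ((if w is u1 :: _ then GH u1 :: res.1 else res.1), res.2).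

(* Running cascades r, r+1, ... with the walks Ps (the first one being P'
   for cascade r); R is the current vertex set, pl the current placement. *)
Fixpoint run (r : nat) (R : {set T}) (pl : T -> nat) (Ps : seq (seq T))
    : seq gate :=
  match Ps with
  | [::] => [::]
  | w :: Ps' =>
    let res := cascade r w pl in
    res.1 ++ run r.+1 [set x in R | res.2 x != r] res.2 Ps'
  end.

(* Validity of the choices: for r >= 2, P' is a shortest walk in G[R] starting
   at the vertex currently holding logical qubit r and visiting all of R. *)
Fixpoint run_ok (r : nat) (R : {set T}) (pl : T -> nat) (Ps : seq (seq T))
    : Prop :=
  match Ps with
  | [::] => True
  | w :: Ps' =>
    let res := cascade r w pl in
    (r = 1 \/ exists v, pl v = r /\ shortest_cover_walk_from R v w) /\
    run_ok r.+1 [set x in R | res.2 x != r] res.2 Ps'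
  end.

(* initial placement: logical qubit r on the r-th distinct vertex of P *)
Definition init_pl (P : seq T) : T -> nat :=
  fun x => (index x (undup P)).+1.

Fixpoint cnot_cost (gs : seq gate) : nat :=
  match gs with
  | [::] => 0
  | g :: tl =>
    match g with
    | GH _ => cnot_cost tl
    | GSWAP _ _ => 3 + cnot_cost tl
    | GCR _ c t =>
      match tl with
      | GSWAP a b :: rest =>
        if ((a == c) && (b == t)) || ((a == t) && (b == c))
        then 3 + cnot_cost rest else 2 + cnot_cost tl
      | _ => 2 + cnot_cost tl
      end
    end
  end.

End QFTDefs.

(* Main.v *)
Require Import Defs.
From mathcomp Require Import all_boot all_algebra.
From mathcomp Require Import zify.

Section Proofs.
Variable T : finType.

Lemma cost_CR (d : int) (c t : T) X :
  cnot_cost (GCR d c t :: X) <= 2 + cnot_cost X.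
Proof.
case: X => [|g X] //=; case: g => //= a b.
by case: ifP => _ //; rewrite addnA leq_add2r.
Qed.

Definition g1_of r (U : {set T}) (pl : T -> nat) (uj uj1 : T) : seq (gate T) :=
  if uj1 \in U then [::] else [:: GCR ((pl uj1)%:Z - r%:Z) uj1 uj].

Lemma loop_nil r sw U (pl : T -> nat) : casc_loop r sw U pl [::] = ([::], pl).
Proof. by []. Qed.
Lemma loop_one r sw U (pl : T -> nat) u : casc_loop r sw U pl [:: u] = ([::], pl).
Proof. by []. Qed.
Lemma loop_skip r sw U (pl : T -> nat) uj uj1 uj2 rest : uj2 == uj ->
  casc_loop r sw U pl [:: uj, uj1, uj2 & rest] =
  (g1_of r U pl uj uj1 ++ (casc_loop r sw (uj1 |: U) pl (uj2 :: rest)).1,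
   (casc_loop r sw (uj1 |: U) pl (uj2 :: rest)).2).
Proof. by move=> H; rewrite /= H. Qed.
Lemma loop_swap r sw U (pl : T -> nat) uj uj1 rest :
  (if rest is uj2 :: _ then uj2 == uj else false) = false ->
  casc_loop r sw U pl [:: uj, uj1 & rest] =
  let pl1 := if sw then swap_pl pl uj uj1 else pl in
  (g1_of r U pl uj uj1 ++ (if sw then [:: GSWAP uj uj1] else [::]) ++
    (casc_loop r sw (uj1 |: U) pl1 (uj1 :: rest)).1,
   (casc_loop r sw (uj1 |: U) pl1 (uj1 :: rest)).2).
Proof. by case: rest => [|uj2 rest] //= ->. Qed.

Local Arguments casc_loop : simpl never.

Lemma loop_cost r sw n : forall (l : seq T), size l <= n -> forall U pl X,
  cnot_cost ((casc_loop r sw U pl l).1 ++ X) <= 3 * (size l).-1 + cnot_cost X.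
Proof.
elim: n => [|n IH] [|uj [|uj1 rest]] Hs U pl X; rewrite ?loop_nil ?loop_one //.
have Hg1 : forall Y, cnot_cost (g1_of r U pl uj uj1 ++ Y) <= 2 + cnot_cost Y.
  move=> Y; rewrite /g1_of; case: ifP => _; [exact: leq_addl | exact: cost_CR].
case Hc: (if rest is uj2 :: _ then uj2 == uj else false).
- case: rest Hs Hc => [|uj2 rest] // Hs Hc.
  rewrite loop_skip // -catA; apply: (leq_trans (Hg1 _)).
  have Hs2 : size (uj2 :: rest) <= n by rewrite /= in Hs *; lia.
  have := IH _ Hs2 (uj1 |: U) pl X.
  move=> H; rewrite /= in H *; lia.
- rewrite loop_swap //=.
  have Hs' : size (uj1 :: rest) <= n by rewrite /= in Hs *; lia.
  have IH2 := IH (uj1 :: rest) Hs' (uj1 |: U).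
  destruct sw.
  + rewrite /g1_of; case: ifP => _ /=.
    * have := IH2 (swap_pl pl uj uj1) X; rewrite /=; move=> H; lia.
    * rewrite !eqxx orbT.
      have := IH2 (swap_pl pl uj uj1) X; rewrite /=; move=> H; lia.
  + rewrite -catA; apply: (leq_trans (Hg1 _)).
    have := IH2 pl X; rewrite /=; move=> H; lia.
Qed.

Lemma loop_pl r sw n : forall (l : seq T), size l <= n -> forall (S : {set T}) U pl,
  all (fun x => x \in S) l -> forall v, v \in S ->
  exists2 x, x \in S & (casc_loop r sw U pl l).2 x = pl v.
Proof.
elim: n => [|n IH] [|uj [|uj1 rest]] Hs S U pl Hall v Hv;
  rewrite ?loop_nil ?loop_one; try by exists v.
all: try by move: Hs.
case Hc: (if rest is uj2 :: _ then uj2 == uj else false).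
- case: rest Hs Hc Hall => [|uj2 rest] // Hs Hc Hall.
  rewrite loop_skip //=.
  have Hs2 : size (uj2 :: rest) <= n by rewrite /= in Hs *; lia.
  apply: IH => //.
  by move: Hall => /= /and3P [].
- rewrite loop_swap //=.
  have Hs' : size (uj1 :: rest) <= n by rewrite /= in Hs *; lia.
  move: Hall => /= /andP [Huj Hall].
  destruct sw; last by apply: IH.
  pose v' := if v == uj then uj1 else if v == uj1 then uj else v.
  have Hv' : v' \in S.
    rewrite /v'; case: ifP => _; first by case/andP: Hall.
    by case: ifP.
  have [x Hx Hx2] := IH _ Hs' S (uj1 |: U) (swap_pl pl uj uj1) Hall v' Hv'.
  exists x => //; rewrite Hx2 /swap_pl /v'.
  case: (eqVneq v uj) => [->|Hvj].
  - case: (eqVneq uj1 uj) => [->|_]; first by [].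
    by rewrite eqxx.
  - case: (eqVneq v uj1) => [->|Hvj1]; first by rewrite eqxx.
    by rewrite (negbTE Hvj) (negbTE Hvj1).
Qed.

Variable e : rel T.
Hypothesis e_sym : symmetric e.

Lemma insert_detour x y : e y x -> forall c v, path e v c -> y \in v :: c ->
  exists c', [/\ path e v c', last v c' = last v c, size c' = (size c).+2
             & v :: c' =i x :: v :: c].
Proof.
move=> Hyx; elim=> [|u c IH] v Hp Hy.
- move: Hy; rewrite inE => /eqP Hyv; subst y.
  exists [:: x; v]; split => //=; first by rewrite Hyx e_sym Hyx.
  by move=> z; rewrite !inE; case: (z == v); case: (z == x).
- case: (eqVneq y v) => [Hyv|Hyv].
  + subst y; exists [:: x, v, u & c]; split => //=.
    * by rewrite Hyx (e_sym x v) Hyx.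
    * by move=> z; rewrite !inE; case: (z == v); case: (z == x).
  + move: Hp => /= /andP [Hvu Hp].
    have Hy' : y \in u :: c by move: Hy; rewrite inE (negbTE Hyv).
    have [c1 [Hp1 Hl1 Hs1 Hm1]] := IH u Hp Hy'.
    exists (u :: c1); split => //=; first by rewrite Hvu.
    + by rewrite Hs1.
    + move=> z; rewrite inE Hm1 !inE.
      by case: (z == v); case: (z == x); case: (z == u).
Qed.

Lemma closed_walk s : forall v, path e v s -> exists c,
  [/\ path e v c, last v c = v, {subset v :: c <= v :: s},
      {subset v :: s <= v :: c} & (size c).+1 <= 2 * #|[set z in v :: s]| - 1].
Proof.
elim/last_ind: s => [|s0 x IH] v Hp.
- exists [::]; split => //.
  have -> : [set z in [:: v]] = [set v] by apply/setP => z; rewrite !inE.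
  by rewrite cards1.
- move: Hp; rewrite rcons_path => /andP [Hp Hx].
  have [c0 [Hp0 Hl0 Hs0 Hs0' Hsz0]] := IH v Hp.
  have Hset : [set z in v :: rcons s0 x] = x |: [set z in v :: s0].
    apply/setP => z; rewrite !inE mem_rcons !inE.
    by case: (z == v); case: (z == x).
  case Hxin: (x \in v :: s0).
  + exists c0; split => //.
    * move=> z /Hs0; rewrite !inE mem_rcons !inE.
      by case/orP => [->|->] //; rewrite !orbT.
    * move=> z; rewrite inE mem_rcons inE => /orP [Hz|/orP [/eqP->|Hz]].
      - by apply: Hs0'; rewrite inE Hz.
      - exact: Hs0'.
      - by apply: Hs0'; rewrite inE Hz orbT.
    * rewrite Hset cardsU1 inE Hxin /=; exact: Hsz0.
  + have Hy : last v s0 \in v :: c0 by apply: Hs0'; exact: mem_last.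
    have [c' [Hp' Hl' Hsz' Hm']] := @insert_detour x (last v s0) Hx c0 v Hp0 Hy.
    exists c'; split => //.
    * by rewrite Hl'.
    * move=> z; rewrite Hm' in_cons => /orP [/eqP->|Hz].
        by rewrite in_cons mem_rcons mem_head orbT.
      have := Hs0 z Hz; rewrite !in_cons mem_rcons in_cons.
      by case/orP => [->|->]; rewrite ?orbT.
    * move=> z Hz; rewrite Hm' in_cons; move: Hz.
      rewrite in_cons mem_rcons in_cons => /orP [Hz|/orP [->|Hz]] //.
      - by apply/orP; right; rewrite in_cons Hz.
      - by apply/orP; right; apply: Hs0'; rewrite in_cons Hz orbT.
    * rewrite Hset cardsU1 inE Hxin /= Hsz'; move: Hsz0; move: #|[set z in v :: s0]| => d; lia.
Qed.

Lemma cascade_cost r (w : seq T) pl X :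
  cnot_cost ((cascade r w pl).1 ++ X) <= 3 * (size w).-1 + cnot_cost X.
Proof.
rewrite /cascade; case: w => [|u w] /=; first by []. 
exact: (@loop_cost r _ (size (u::w)) (u::w) (leqnn _)).
Qed.

Lemma cascade_pl r (w : seq T) pl (S : {set T}) v :
  all (fun x => x \in S) w -> v \in S ->
  exists2 x, x \in S & (cascade r w pl).2 x = pl v.
Proof. by move=> Ha Hv; rewrite /cascade; apply: (@loop_pl r _ (size w) w (leqnn _)). Qed.

Lemma card_shrink (R : {set T}) (f : T -> nat) r x : x \in R -> f x = r ->
  #|[set y in R | f y != r]| < #|R|.
Proof.
move=> Hx Hf; rewrite (cardsD1 x R) Hx add1n ltnS; apply: subset_leq_card.
apply/subsetP => y; rewrite !inE => /andP [Hy Hfy].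
rewrite Hy andbT; apply/eqP => Hxy; subst y; by rewrite Hf eqxx in Hfy.
Qed.

Lemma walk_bound (R : {set T}) v w :
  shortest_cover_walk_from e R v w -> size w <= 2 * #|R| - 1.
Proof.
case=> Hw Hc Hh Hmin.
case: w Hw Hc Hh Hmin => [|u s] // Hw Hc [] Hu Hmin; subst u.
move: Hw => /andP [Hp Hall].
have [c [Hpc Hlc Hsub Hsub' Hsz]] := @closed_walk s v Hp.
have Hle : size (v :: s) <= size (v :: c).
  apply: Hmin => //.
  - apply/andP; split; first exact: Hpc.
    apply/allP => z /Hsub Hz.
    by move/allP: Hall; apply.
  - apply/forallP => z; apply/implyP => Hz; apply: Hsub'.
    by move/forallP: Hc => /(_ z) /implyP; apply.
have Hcard : #|[set z in v :: s]| <= #|R|.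
  apply: subset_leq_card; apply/subsetP => z; rewrite inE => Hz.
  by move/allP: Hall; apply.
move: Hle Hsz Hcard => /=; move: #|[set z in v :: s]| #|R| => d m; lia.
Qed.

Lemma run_bound Ps : forall r (R : {set T}) pl, 1 < r -> run_ok e r R pl Ps ->
  cnot_cost (run r R pl Ps) <= 3 * #|R| * (#|R|).-1.
Proof.
elim: Ps => [|w Ps IH] r R pl Hr //= [[Hr1|[v [Hv Hsh]]] Hok].
  by subst r.
have Hwb := @walk_bound R v w Hsh.
have Hall : all (fun x => x \in R) w by case: Hsh => /andP [].
have HvR : v \in R.
  case: Hsh => _ _ Hh _; move/allP: (Hall); apply.
  by case: (w) Hh => [|u s] //= [->]; exact: mem_head.
have [x Hx Hx2] := @cascade_pl r w pl R v Hall HvR.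
set pl' := (cascade r w pl).2 in Hx2.
change (run_ok e r.+1 [set y in R | pl' y != r] pl' Ps) in Hok.
change (cnot_cost ((cascade r w pl).1 ++ run r.+1 [set y in R | pl' y != r] pl' Ps)
  <= 3 * #|R| * #|R|.-1).
have Hsh2 := @card_shrink R pl' r x Hx (etrans Hx2 Hv).
have HIH := IH _ _ _ (ltn_trans Hr (ltnSn r)) Hok.
apply: (leq_trans (cascade_cost _ _ _ _)).
move: Hwb Hsh2 HIH.
move: #|[set y in R | pl' y != r]| => m'.
move: (cnot_cost _) => C; move: #|R| (size w) => m k.
move=> H1 H2 H3.
have H4 : m' * m'.-1 <= m.-1 * (m.-1).-1 by apply: leq_mul; lia.
nia.
Qed.
End Proofs.

Theorem theorem6 (T : finType) (e : rel T)
  (e_sym : symmetric e) (e_irr : irreflexive e)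
  (e_conn : forall x y : T, connect e x y)
  (k : nat) (hk : min_cover_length e k)
  (P : seq T) (hP : shortest_cover_walk e setT P)
  (Ps : seq (seq T)) (hPs : size Ps = #|T|.-1)
  (hrun : run_ok e 1 setT (init_pl P) (P :: Ps)) :
  cnot_cost (run 1 setT (init_pl P) (P :: Ps)) <= 3 * k * #|T| - 2 * #|T|.
Proof.
have [[s [Hws Hcs Hss]] Hkmin] := hk.
case: hP => HwP HcP HminP.
have HkP : size P = k.
  apply/eqP; rewrite eqn_leq Hkmin // andbT -Hss; exact: HminP.
have Hnk : #|T| <= k.
  rewrite -HkP; apply: (leq_trans _ (card_size P)); apply: subset_leq_card.
  apply/subsetP => x _; move/forallP: HcP => /(_ x); by rewrite in_setT.
case HPv: P HwP HcP HminP HkP hrun => [|v s0] // HwP HcP HminP HkP hrun.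
rewrite -HPv in hrun *.
have [a Ha] : exists a, init_pl P a = 1.
  case HU: (undup P) => [|a u].
  - have : v \in undup P by rewrite mem_undup HPv mem_head.
    by rewrite HU.
  - by exists a; rewrite /init_pl HU /= eqxx.
have Hall : all (fun x => x \in [set: T]) P by apply/allP => x _; rewrite in_setT.
have [x Hx Hx2] := @cascade_pl T 1 P (init_pl P) setT a Hall (in_setT a).
case: hrun => _ hrun.
set pl' := (cascade 1 P (init_pl P)).2 in Hx2.
change (run_ok e 2 [set y in setT | pl' y != 1] pl' Ps) in hrun.
change (cnot_cost ((cascade 1 P (init_pl P)).1 ++ run 2 [set y in setT | pl' y != 1] pl' Ps)
  <= 3 * k * #|T| - 2 * #|T|).
have Hsh := @card_shrink T setT pl' 1 x Hx (etrans Hx2 Ha).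
have HIH := @run_bound T e e_sym Ps 2 _ pl' (ltnSn 1) hrun.
apply: (leq_trans (cascade_cost _ _ _ _ _)).
rewrite cardsT in Hsh.
have Hn : 0 < #|T| by apply/card_gt0P; exists v.
move: Hsh HIH; rewrite (_ : size P = k); last by rewrite HPv.
move: #|[set y in setT | pl' y != 1]| => m'.
move: (cnot_cost _) => C; move: #|T| Hn Hnk => n Hn Hnk H1 H2.
have H4 : m' * m'.-1 <= n.-1 * (n.-1).-1 by apply: leq_mul; lia.
nia.
Qed.
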